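(* Let $f:\mathbb{R}^d\to\mathbb{R}$ be convex, symmetric and sign invariant, $g(w,x)=f_\sigma(wx^\top-\bar w\bar x^\top)$, and suppose there is $\kappa>0$ with $$g(w,x)-g(\bar w,\bar x)\ge\kappa\|wx^\top-\bar w\bar x^\top\|_F\quad\text{for all }(w,x)\in\mathbb{R}^{d_1}\times\mathbb{R}^{d_2}.$$ Then for every $(w,x)$ with $wx^\top\ne\bar w\bar x^\top$ and every $Y\in\partial f_\sigma(wx^\top-\bar w\bar x^\top)$, $\sigma_1(Y)+\sigma_2(Y)\ge\kappa$.
   Context: Let $d=\min\{d_1,d_2\}$ and $\sigma:\mathbb{R}^{d_1\times d_2}\to\mathbb{R}^d_+$ give singular values in nonincreasing order (with $\sigma_2:=0$ if $d=1$). $f$ is symmetric if $f(\pi s)=f(s)$ for all permutation matrices $\pi$, sign invariant if $f(Ds)=f(s)$ for all diagonal $D$ with entries in $\{\pm1\}$; $f_\sigma=f\circ\sigma$ is then convex and $\partial f_\sigma$ is its convex subdifferential. $\bar w\in\mathbb{R}^{d_1}$, $\bar x\in\mathbb{R}^{d_2}$ are fixed; $\|\cdot\|_F$ is the Frobenius norm. *)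

(* Defs.v *)
From HB Require Import structures.
From mathcomp Require Import all_boot all_order all_algebra all_fingroup.
From Stdlib Require Import ClassicalEpsilon.
Set Implicit Arguments. Unset Strict Implicit. Unset Printing Implicit Defensive.
Import Order.TTheory GRing.Theory Num.Theory.
Local Open Scope ring_scope.

Section Defs.
Variable R : rcfType.

Definition rdiag (d1 d2 : nat) (s : 'rV[R]_(minn d1 d2)) : 'M[R]_(d1, d2) :=
  \matrix_(i < d1, j < d2)
    \sum_(k < minn d1 d2) (if ((k : nat) == i) && ((k : nat) == j) then s 0 k else 0).

Definition orthogonal_mx n (U : 'M[R]_n) : Prop := U *m U^T = 1%:M.

Definition is_svd (d1 d2 : nat) (A : 'M[R]_(d1, d2)) (s : 'rV[R]_(minn d1 d2)) : Prop :=
  (forall i : 'I_(minn d1 d2), 0 <= s 0 i) /\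
  (forall i j : 'I_(minn d1 d2), (i <= j)%N -> s 0 j <= s 0 i) /\
  exists (U : 'M[R]_d1) (V : 'M[R]_d2),
    orthogonal_mx U /\ orthogonal_mx V /\ A = U *m rdiag s *m V^T.

Definition sigma (d1 d2 : nat) (A : 'M[R]_(d1, d2)) : 'rV[R]_(minn d1 d2) :=
  epsilon (inhabits 0) (is_svd A).

(* k-th singular value (0-based), equal to 0 if k >= d *)
Definition sv (d1 d2 : nat) (A : 'M[R]_(d1, d2)) (k : nat) : R :=
  \sum_(i < minn d1 d2 | (i : nat) == k) sigma A 0 i.

Definition convex_fun n (f : 'rV[R]_n -> R) : Prop :=
  forall (x y : 'rV[R]_n) (t : R), 0 <= t -> t <= 1 ->
    f (t *: x + (1 - t) *: y) <= t * f x + (1 - t) * f y.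

Definition symmetric_fun n (f : 'rV[R]_n -> R) : Prop :=
  forall (p : 'S_n) (s : 'rV[R]_n), f (s *m perm_mx p) = f s.

Definition sign_invariant n (f : 'rV[R]_n -> R) : Prop :=
  forall (e : 'rV[R]_n) (s : 'rV[R]_n),
    (forall i, e 0 i = 1 \/ e 0 i = -1) -> f (s *m diag_mx e) = f s.

Definition f_sigma (d1 d2 : nat) (f : 'rV[R]_(minn d1 d2) -> R) (A : 'M[R]_(d1, d2)) : R :=
  f (sigma A).

Definition frob_inner m n (A B : 'M[R]_(m, n)) : R :=
  \sum_(i < m) \sum_(j < n) A i j * B i j.

Definition frob_norm m n (A : 'M[R]_(m, n)) : R := Num.sqrt (frob_inner A A).

Definition subdiff m n (F : 'M[R]_(m, n) -> R) (A Y : 'M[R]_(m, n)) : Prop :=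
  forall B : 'M[R]_(m, n), F A + frob_inner Y (B - A) <= F B.

End Defs.

(* Main.v *)
Require Import Defs.
From HB Require Import structures.
From mathcomp Require Import all_boot all_order all_algebra all_fingroup.
From mathcomp Require Import ring lra.
From mathcomp Require complex.
From Stdlib Require Import ClassicalEpsilon.
Set Implicit Arguments. Unset Strict Implicit. Unset Printing Implicit Defensive.
Import Order.TTheory GRing.Theory Num.Theory.
Local Open Scope ring_scope.

Section Gen.
Variable R : rcfType.

Lemma cs_sum (I : Type) (r : seq I) (x y : I -> R) :
  (\sum_(i <- r) x i * y i) ^+ 2 <=
  (\sum_(i <- r) x i ^+ 2) * (\sum_(i <- r) y i ^+ 2).
Proof.
set X := \sum_(i <- r) x i ^+ 2; set Y := \sum_(i <- r) y i ^+ 2.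
set Z := \sum_(i <- r) x i * y i.
have key : forall t : R, 0 <= t ^+ 2 * X - 2 * t * Z + Y.
  move=> t.
  have -> : t ^+ 2 * X - 2 * t * Z + Y = \sum_(i <- r) (t * x i - y i) ^+ 2.
    rewrite /X /Y /Z mulr_sumr mulr_sumr -sumrN -!big_split /=.
    by apply: eq_bigr => i _; ring.
  by apply: sumr_ge0 => i _; exact: sqr_ge0.
have X0 : 0 <= X by apply: sumr_ge0 => i _; exact: sqr_ge0.
have Y0 : 0 <= Y by apply: sumr_ge0 => i _; exact: sqr_ge0.
have [Xp|] := ltrP 0 X.
  have := key (Z / X).
  have -> : (Z / X) ^+ 2 * X - 2 * (Z / X) * Z + Y = (X * Y - Z ^+ 2) / X.
    by field; rewrite gt_eqF.
  rewrite pmulr_lge0 ?invr_gt0 // subr_ge0 => H.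
  exact: H.
move=> Xle; have X00 : X = 0 by apply/eqP; rewrite eq_le Xle X0.
have [Z0|Zn0] := eqVneq Z 0.
  by rewrite Z0 expr0n /= X00 mul0r.
have := key ((Y + 1) / (2 * Z)).
rewrite X00 mulr0 add0r.
have -> : 2 * ((Y + 1) / (2 * Z)) * Z = Y + 1 by field; rewrite Zn0.
move=> H; exfalso; lra.
Qed.

Lemma cs_sum_sqrt (I : Type) (r : seq I) (x y : I -> R) :
  \sum_(i <- r) x i * y i <=
  Num.sqrt (\sum_(i <- r) x i ^+ 2) * Num.sqrt (\sum_(i <- r) y i ^+ 2).
Proof.
rewrite -sqrtrM; last by apply: sumr_ge0 => i _; exact: sqr_ge0.
apply: le_trans (ler_norm _) _.
by rewrite -sqrtr_sqr ler_sqrt ?cs_sum // mulr_ge0 // sumr_ge0 // => i _; exact: sqr_ge0.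
Qed.

Lemma abel (t z : nat -> R) (n : nat) :
  (forall k, 0 <= t k) -> (forall i j, (i <= j)%N -> t j <= t i) ->
  forall m (B : R), (m <= n)%N -> 0 <= B ->
  (forall j, (m < j <= n)%N -> \sum_(m <= k < j) z k <= B) ->
  \sum_(m <= k < n) t k * z k <= t m * B.
Proof.
move=> t0 tdec m B.
elim: {m} (n - m)%N {-2}m (erefl (n - m)%N) B => [|l IH] m Hl B Hmn B0 Hj.
  have -> : m = n by apply/eqP; rewrite eqn_leq Hmn /= -subn_eq0 Hl.
  by rewrite big_geq // mulr_ge0.
have mn : (m < n)%N by rewrite -subn_gt0 Hl.
rewrite big_ltn //.
have zm : z m <= B by have := Hj m.+1; rewrite ltnSn mn big_nat1; apply.
have IH' := IH m.+1 _ (B - z m) mn.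
have : \sum_(m.+1 <= k < n) t k * z k <= t m.+1 * (B - z m).
  apply: IH'; first by rewrite subnS Hl.
    by rewrite subr_ge0.
  move=> j /andP [mj jn]; rewrite lerBrDl.
  have := Hj j; rewrite jn andbT (ltn_trans (ltnSn m) mj) => /(_ isT).
  by rewrite big_ltn ?(ltn_trans (ltnSn m) mj).
move=> H.
have tm : t m.+1 <= t m by apply: tdec.
have tm0 := t0 m.+1.
have : (t m - t m.+1) * (B - z m) >= 0 by apply: mulr_ge0; rewrite subr_ge0.
nra.
Qed.

End Gen.

Module EigM.
Import complex.
Section Eig.
Variable R : rcfType.
Local Notation C := (R[i]).
Local Notation Re := (@complex.Re R).
Local Notation Im := (@complex.Im R).

Lemma ReD (x y : C) : Re (x + y) = Re x + Re y. Proof. case: x => ? ?; case: y => ? ?; reflexivity. Qed.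
Lemma ImD (x y : C) : Im (x + y) = Im x + Im y. Proof. case: x => ? ?; case: y => ? ?; reflexivity. Qed.
Lemma Re0 : Re (0 : C) = 0. Proof. by []. Qed.
Lemma Im0 : Im (0 : C) = 0. Proof. by []. Qed.
Lemma ReM (x y : C) : Re (x * y) = Re x * Re y - Im x * Im y.
Proof. by case: x => a b; case: y. Qed.
Lemma ImM (x y : C) : Im (x * y) = Re x * Im y + Im x * Re y.
Proof. by case: x => a b; case: y. Qed.
Lemma ReC (r : R) : Re (real_complex R r) = r. Proof. by []. Qed.
Lemma ImC (r : R) : Im (real_complex R r) = 0. Proof. by []. Qed.

Lemma Re_sum (I : Type) (r : seq I) (F : I -> C) :
  Re (\sum_(i <- r) F i) = \sum_(i <- r) Re (F i).
Proof. exact: (big_morph _ ReD Re0). Qed.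
Lemma Im_sum (I : Type) (r : seq I) (F : I -> C) :
  Im (\sum_(i <- r) F i) = \sum_(i <- r) Im (F i).
Proof. exact: (big_morph _ ImD Im0). Qed.

Lemma sym_eig n (S : 'M[R]_n) : (0 < n)%N -> S^T = S ->
  exists a (v : 'rV[R]_n), v *m S = a *: v /\ v != 0.
Proof.
move=> n0 SS.
pose SC := map_mx (real_complex R) S.
have [mu] := Theorem7' SC n0.
move=> /eigenvalueP [z zS z0].
pose x := map_mx Re z; pose y := map_mx Im z.
pose a := Re mu; pose b := Im mu.
have ex : x *m S = a *: x - b *: y.
  apply/rowP => j; have /rowP /(_ j) := zS.
  rewrite !mxE => /(congr1 Re); rewrite Re_sum ReM => <-.
  by apply: eq_bigr => k _; rewrite !mxE ReM ReC ImC mulr0 subr0.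
have ey : y *m S = a *: y + b *: x.
  apply/rowP => j; have /rowP /(_ j) := zS.
  rewrite !mxE => /(congr1 Im); rewrite Im_sum ImM => <-.
  by apply: eq_bigr => k _; rewrite !mxE ImM ReC ImC mulr0 add0r.
pose dot (u v : 'rV[R]_n) := (u *m v^T) 0 0.
have dotC : forall u v, dot u v = dot v u.
  move=> u v; rewrite /dot !mxE; apply: eq_bigr => k _; rewrite !mxE mulrC.
  by [].
have sym : dot (x *m S) y = dot (y *m S) x.
  rewrite [RHS]dotC /dot -mulmxA.
  by rewrite -{1}SS -trmx_mul.
have dZ : forall c u v, dot (c *: u) v = c * dot u v.
  by move=> c u v; rewrite /dot -scalemxAl mxE.
have dD : forall u u' v, dot (u + u') v = dot u v + dot u' v.
  by move=> u u' v; rewrite /dot mulmxDl mxE.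
have dN : forall u v, dot (- u) v = - dot u v.
  by move=> u v; rewrite /dot mulNmx mxE.
have dpos : forall u, 0 <= dot u u.
  move=> u; rewrite /dot mxE; apply: sumr_ge0 => k _; rewrite !mxE; by rewrite -expr2 sqr_ge0.
have d0 : forall u, dot u u = 0 -> u = 0.
  move=> u; rewrite /dot mxE => /eqP; rewrite psumr_eq0; last first.
    by move=> k _; rewrite !mxE; by rewrite -expr2 sqr_ge0.
  move=> /allP H; apply/rowP => k; rewrite mxE.
  have := H k (mem_index_enum _); rewrite !mxE /= mulf_eq0 orbb => /eqP.
  by [].
have Hb : b * (dot x x + dot y y) = 0.
  move: sym; rewrite ex ey !dD !dN !dZ (dotC y x) => H.
  apply/eqP; rewrite -subr_eq0; apply/eqP; move: H; lra.
have nz : dot x x + dot y y != 0.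
  apply/negP => /eqP H.
  have hx : dot x x = 0 by have := dpos x; have := dpos y; lra.
  have hy : dot y y = 0 by have := dpos x; have := dpos y; lra.
  move/d0: hx => hx; move/d0: hy => hy.
  move/eqP: z0; apply; apply/rowP => k.
  have := congr1 (fun m : 'rV_n => m 0 k) hx; have := congr1 (fun m : 'rV_n => m 0 k) hy.
  rewrite /x /y !mxE; case: (z 0 k) => p q /= -> ->; reflexivity.
have b0 : b = 0.
  by move/eqP: Hb; rewrite mulf_eq0 (negbTE nz) orbF => /eqP.
have [x0|xn0] := eqVneq x 0.
  exists a, y; split; first by rewrite ey b0 scale0r addr0.
  apply/negP => /eqP y0; move/negP: nz; apply.
  by rewrite x0 y0 /dot !mxE !big1 ?addr0 // => k _; rewrite !mxE mul0r.
exists a, x; split => //; by rewrite ex b0 scale0r subr0.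
Qed.
End Eig.
End EigM.
Import EigM.

Section House.
Variable R : rcfType.

Lemma cnorm_ge0 n (u : 'cV[R]_n) : 0 <= (u^T *m u) 0 0.
Proof. rewrite mxE; apply: sumr_ge0 => k _; rewrite !mxE; by rewrite -expr2 sqr_ge0. Qed.

Lemma cnorm_eq0 n (u : 'cV[R]_n) : (u^T *m u) 0 0 = 0 -> u = 0.
Proof.
rewrite mxE => /eqP; rewrite psumr_eq0; last first.
  by move=> k _; rewrite !mxE -expr2 sqr_ge0.
move=> /allP H; apply/colP => k; rewrite mxE.
by have := H k (mem_index_enum _); rewrite !mxE /= mulf_eq0 orbb => /eqP.
Qed.

Lemma householder n (v : 'cV[R]_n.+1) : v^T *m v = 1%:M ->
  exists H : 'M[R]_n.+1, H *m H^T = 1%:M /\ H *m delta_mx 0 0 = v.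
Proof.
move=> vv.
pose e : 'cV[R]_n.+1 := delta_mx 0 0.
pose w := v - e.
have ee : e^T *m e = 1%:M.
  apply/matrixP => i j; rewrite [i]ord1 [j]ord1 !mxE (bigD1 0) //= big1.
    by rewrite !mxE eqxx mulr1 addr0.
  by move=> k k0; rewrite !mxE (negbTE k0) mul0r.
have ve : v^T *m e = (v 0 0)%:M.
  apply/matrixP => i j; rewrite [i]ord1 [j]ord1 !mxE (bigD1 0) //= big1.
    by rewrite !mxE eqxx mulr1 addr0.
  by move=> k k0; rewrite !mxE (negbTE k0) mulr0.
have ev : e^T *m v = (v 0 0)%:M by rewrite -[e^T *m v]trmxK trmx_mul trmxK ve tr_scalar_mx.
have wT : w^T = v^T - e^T by rewrite /w linearB.
have ww : w^T *m w = (2 - 2 * v 0 0)%:M.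
  rewrite wT /w mulmxBl !mulmxBr vv ee ve ev.
  by rewrite -!raddfB /=; congr (_%:M); ring.
have we : w^T *m e = (v 0 0 - 1)%:M.
  by rewrite wT mulmxBl ve ee -raddfB.
set c := 2 - 2 * v 0 0 in ww.
have [c0|cn0] := eqVneq c 0.
  have v1 : v 0 0 = 1 by move: c0; rewrite /c; lra.
  have w0 : w = 0.
    by apply: cnorm_eq0; rewrite ww c0 mxE.
  exists 1%:M; rewrite trmx1 mulmx1 mul1mx; split => //.
  by apply/eqP; rewrite eq_sym -subr_eq0 -/e -/w w0.
pose H := 1%:M - (2 / c) *: (w *m w^T).
have HT : H^T = H by rewrite /H linearB /= linearZ /= trmx_mul trmxK trmx1.
exists H; split.
  rewrite HT /H mulmxBl !mulmxBr mul1mx mulmx1 -!scalemxAl -!scalemxAr.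
  rewrite !mulmxA -[w *m w^T *m w]mulmxA ww mul_mx_scalar scalerA.
  rewrite -!scalemxAl !scalerA.
  apply/eqP; rewrite -subr_eq0; apply/eqP.
  rewrite mul1mx.
  have -> : (2 / c * (2 / c) * c) = 2 / c + 2 / c by field.
  by rewrite scalerDl opprB addrK subrK subrr.
rewrite /H mulmxBl mul1mx -scalemxAl -mulmxA -/e we mul_mx_scalar scalerA.
have -> : 2 / c * (v 0 0 - 1) = -1 by rewrite /c; field; move: cn0; rewrite /c.
by rewrite scaleN1r opprK /w addrC subrK.
Qed.
End House.

Section Spec.
Variable R : rcfType.

Lemma blk_orth n (Q : 'M[R]_n) : Q *m Q^T = 1%:M ->
  block_mx (1%:M : 'M_1) 0 0 Q *m (block_mx (1%:M : 'M_1) 0 0 Q)^T = 1%:M.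
Proof.
move=> QQ; rewrite tr_block_mx mulmx_block !trmx0 trmx1 !mulmx0 !mul0mx !mulmx1 !addr0 !add0r QQ.
by rewrite -scalar_mx_block.
Qed.

Lemma blk_conj n (Q D : 'M[R]_n) (a : R) :
  block_mx (1%:M : 'M_1) 0 0 Q *m block_mx (a%:M : 'M_1) 0 0 D *m
   (block_mx (1%:M : 'M_1) 0 0 Q)^T = block_mx (a%:M : 'M_1) 0 0 (Q *m D *m Q^T).
Proof.
rewrite tr_block_mx !mulmx_block !trmx0 trmx1 !mulmx0 !mul0mx !mulmx1 !mul1mx !addr0 !add0r.
by rewrite mul0mx.
Qed.

Lemma diag11 (a : R) : diag_mx (a%:M : 'rV_1) = a%:M.
Proof. by apply/matrixP => i j; rewrite [i]ord1 [j]ord1 !mxE. Qed.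

Lemma diag_row1 n (mu' : 'rV[R]_n) (a : R) :
  @diag_mx R n.+1 (row_mx (a%:M : 'rV_1) mu') = block_mx (a%:M : 'M_1) 0 0 (diag_mx mu').
Proof. rewrite -[X in block_mx X _ _ _]diag11; exact: (@diag_mx_row _ n 1 (a%:M) mu'). Qed.

Lemma spectral n (S : 'M[R]_n) : S^T = S ->
  exists (Q : 'M[R]_n) (mu : 'rV[R]_n), Q *m Q^T = 1%:M /\ S = Q *m diag_mx mu *m Q^T.
Proof.
elim: n S => [|n IH] S SS.
  by exists 1%:M, 0; rewrite trmx1 mulmx1; split => //; rewrite !flatmx0.
have [a [v [vS v0]]] := sym_eig (ltn0Sn n) SS.
pose u := v^T.
have Su : S *m u = a *: u by rewrite /u -{1}SS -trmx_mul vS linearZ.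
have un : u != 0 by apply: contra v0 => /eqP h; rewrite -[v]trmxK -/u h trmx0.
set nu := (u^T *m u) 0 0.
have nu0 : 0 < nu.
  rewrite lt_def cnorm_ge0 andbT; apply: contra un => /eqP h.
  by apply/eqP; apply: cnorm_eq0.
pose u1 := (Num.sqrt nu)^-1 *: u.
have u1n : u1^T *m u1 = 1%:M.
  rewrite /u1 -scalemxAr [(_ *: u)^T]linearZ /= -scalemxAl scalerA [u^T *m u]mx11_scalar -/nu.
  rewrite scale_scalar_mx; congr (_%:M).
  by rewrite -invfM -expr2 sqr_sqrtr ?ltW // mulVf ?gt_eqF.
have Su1 : S *m u1 = a *: u1 by rewrite /u1 -scalemxAr Su !scalerA mulrC.
have [H [HH He]] := householder u1n.
have HH' : H^T *m H = 1%:M := mulmx1C HH.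
pose T : 'M[R]_(1 + n) := H^T *m S *m H.
have TT : T^T = T by rewrite /T !trmx_mul trmxK SS mulmxA.
have Te : T *m (delta_mx 0 0 : 'cV_(1 + n)) = a *: delta_mx 0 0.
  rewrite /T -!mulmxA He Su1 -scalemxAr -He mulmxA HH' mul1mx //.
have Tc : col 0 T = a *: delta_mx 0 0 by rewrite colE.
have l0 : forall j : 'I_1, lshift n j = 0 by move=> j; apply/val_inj; rewrite /= [j]ord1.
have Tdl : dlsubmx T = 0.
  apply/matrixP => i j; rewrite !mxE l0.
  have /matrixP /(_ (rshift 1 i) 0) := Tc.
  by rewrite !mxE /= mulr0.
have Tur : ursubmx T = 0.
  by rewrite -{1}TT -trmx_dlsub Tdl trmx0.
have Tul : ulsubmx T = a%:M.
  rewrite [ulsubmx T]mx11_scalar; congr (_%:M).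
  have /matrixP /(_ 0 0) := Tc.
  by rewrite !mxE l0 /= mulr1.
have S'S : (drsubmx T)^T = drsubmx T by rewrite trmx_drsub TT.
have [Q' [mu' [QQ' ES']]] := IH _ S'S.
exists (H *m block_mx (1%:M : 'M_1) 0 0 Q'), (row_mx (a%:M : 'rV_1) mu'); split.
  rewrite trmx_mul mulmxA -(mulmxA H) (blk_orth QQ') mulmx1 HH //.
have ET : T = block_mx (a%:M : 'M_1) 0 0 (Q' *m diag_mx mu' *m Q'^T).
  by rewrite -Tul -Tur -Tdl -ES' submxK.
have SHT : S = H *m T *m H^T by rewrite /T !mulmxA HH mul1mx -mulmxA HH mulmx1.
rewrite {1}SHT ET -blk_conj trmx_mul diag_row1 !mulmxA //.
Qed.
End Spec.

Section SVD.
Variable R : rcfType.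

Definition ndiag m n (s : nat -> R) : 'M[R]_(m, n) :=
  \matrix_(i, j) if (i : nat) == j then s i else 0.

Definition nrm2 n (x : 'cV[R]_n) := (x^T *m x) 0 0.

Lemma nrm2_orth n (Q : 'M[R]_n) (x : 'cV[R]_n) : Q^T *m Q = 1%:M ->
  nrm2 (Q *m x) = nrm2 x.
Proof. by move=> QQ; rewrite /nrm2 trmx_mul mulmxA -(mulmxA x^T) QQ mulmx1. Qed.

Lemma nrm2_Z n c (x : 'cV[R]_n) : nrm2 (c *: x) = c ^+ 2 * nrm2 x.
Proof.
by rewrite /nrm2 -scalemxAr [(_ *: x)^T]linearZ /= -scalemxAl scalerA mxE expr2.
Qed.

Lemma nrm2_col m n (a : 'cV[R]_m) (b : 'cV[R]_n) :
  nrm2 (col_mx a b) = nrm2 a + nrm2 b.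
Proof. by rewrite /nrm2 tr_col_mx mul_row_col mxE. Qed.

Lemma nrm20 n : nrm2 (0 : 'cV[R]_n) = 0.
Proof. by rewrite /nrm2 mulmx0 mxE. Qed.

Lemma nrm2_col0 n (x : 'cV[R]_n) : @nrm2 n.+1 (col_mx (0 : 'cV_1) x) = nrm2 x.
Proof. by have := nrm2_col (0 : 'cV_1) x; rewrite nrm20 add0r. Qed.

Lemma nrm2_ge0 n (x : 'cV[R]_n) : 0 <= nrm2 x.
Proof. exact: cnorm_ge0. Qed.

Lemma nrm2_e0 n : nrm2 (delta_mx 0 0 : 'cV[R]_n.+1) = 1.
Proof.
rewrite /nrm2 mxE (bigD1 0) //= big1 => [|k k0]; last by rewrite !mxE (negbTE k0) mul0r.
by rewrite !mxE eqxx mulr1 addr0.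
Qed.

Lemma ndiag_e0 m n (s : nat -> R) :
  ndiag m.+1 n.+1 s *m (delta_mx 0 0 : 'cV_n.+1) = s 0%N *: delta_mx 0 0.
Proof.
apply/colP => i; rewrite !mxE (bigD1 0) //= big1 => [|k k0]; last by rewrite !mxE (negbTE k0) mulr0.
rewrite !mxE eqxx mulr1 addr0 eq_sym.
by case: i => [[|i] Hi] //=; rewrite ?mulr1 ?mulr0.
Qed.

Lemma top_bound m n (Y : 'M[R]_(m, n)) U V s lam :
  U *m U^T = 1%:M -> V *m V^T = 1%:M ->
  (forall k, (minn m n <= k)%N -> s k = 0) -> Y = U *m ndiag m n s *m V^T ->
  0 <= lam -> (forall x, nrm2 (Y *m x) <= lam * nrm2 x) -> s 0%N ^+ 2 <= lam.
Proof.
case: m Y U s => [|m] Y U s UU VV s0 EY l0 Hx.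
  by rewrite s0 ?expr0n //= min0n.
case: n Y V s UU VV s0 EY Hx => [|n] Y V s UU VV s0 EY Hx.
  by rewrite s0 ?expr0n //= minn0.
have := Hx (V *m delta_mx 0 0).
rewrite EY -!mulmxA (mulmxA V^T) (mulmx1C VV) mul1mx ndiag_e0 -scalemxAr.
rewrite nrm2_Z (nrm2_orth _ (mulmx1C UU)) (nrm2_orth _ (mulmx1C VV)) !nrm2_e0 !mulr1; apply.
Qed.


Lemma exmax n (f : 'I_n.+1 -> R) : exists k, forall i, f i <= f k.
Proof.
exists [arg max_(i > ord0) f i]%O.
case: arg_maxP => //= k _ H i; exact: H.
Qed.

Lemma nrm2_delta n (k : 'I_n) : nrm2 (delta_mx k 0 : 'cV[R]_n) = 1.
Proof.
rewrite /nrm2 mxE (bigD1 k) //= big1 => [|j jk]; last by rewrite !mxE (negbTE jk) mul0r.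
by rewrite !mxE eqxx mulr1 addr0.
Qed.

Lemma diag_delta n (mu : 'rV[R]_n) (k : 'I_n) :
  diag_mx mu *m delta_mx k 0 = mu 0 k *: (delta_mx k 0 : 'cV_n).
Proof.
apply/colP => i; rewrite !mxE (bigD1 k) //= big1 => [|j jk]; last by rewrite !mxE (negbTE jk) mulr0.
rewrite !mxE !eqxx mulr1 addr0 eq_sym.
by case: eqP => [->|]; rewrite ?mulr1 ?mulr0 ?mulr0n // mulr1n.
Qed.

Lemma quad_diag n (mu : 'rV[R]_n) (y : 'cV[R]_n) :
  (y^T *m diag_mx mu *m y) 0 0 = \sum_i mu 0 i * y i 0 ^+ 2.
Proof.
rewrite mxE; apply: eq_bigr => i _; rewrite mxE (bigD1 i) //= big1 => [|j ji].
  by rewrite !mxE eqxx mulr1n addr0; ring.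
by rewrite !mxE (negbTE ji) mulr0n mulr0.
Qed.

Lemma ndiag0 m n : ndiag m n (fun _ => 0) = 0.
Proof. by apply/matrixP => i j; rewrite !mxE; case: eqP. Qed.

Lemma ndiag_block' m n (s : nat -> R) (c : R) :
  ndiag (1 + m) (1 + n) (fun k => if k is k'.+1 then s k' else c) =
  block_mx (c%:M : 'M_1) 0 0 (ndiag m n s).
Proof.
apply/matrixP => i j.
case: (split_ordP i) => i' ->; case: (split_ordP j) => j' ->;
  rewrite ?block_mxEul ?block_mxEur ?block_mxEdl ?block_mxEdr !mxE /=.
- by rewrite [i']ord1 [j']ord1.
- by rewrite [i']ord1.
- by rewrite [j']ord1.
- by rewrite eqSS.
Qed.

Lemma ndiag_block m n (s : nat -> R) (c : R) :
  ndiag m.+1 n.+1 (fun k => if k is k'.+1 then s k' else c) =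
  block_mx (c%:M : 'M_1) 0 0 (ndiag m n s).
Proof. exact: ndiag_block'. Qed.

Lemma blk_conj2 m n (U : 'M[R]_m) (V : 'M[R]_n) D (c : R) :
  block_mx (1%:M : 'M_1) 0 0 U *m block_mx (c%:M : 'M_1) 0 0 D *m
   (block_mx (1%:M : 'M_1) 0 0 V)^T = block_mx (c%:M : 'M_1) 0 0 (U *m D *m V^T).
Proof.
rewrite tr_block_mx !mulmx_block !trmx0 trmx1 !mulmx0 !mul0mx !mulmx1 !mul1mx !addr0 !add0r.
by rewrite mul0mx.
Qed.

Lemma svd_nat m n (Y : 'M[R]_(m, n)) : exists U V (s : nat -> R),
  U *m U^T = 1%:M /\ V *m V^T = 1%:M /\ (forall k, 0 <= s k) /\
      (forall i j, (i <= j)%N -> s j <= s i) /\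
      (forall k, (minn m n <= k)%N -> s k = 0) /\
      Y = U *m ndiag m n s *m V^T.
Proof.
have triv : forall m0 n0 (Y0 : 'M[R]_(m0, n0)), Y0 = 0 -> exists U V (s : nat -> R),
  U *m U^T = 1%:M /\ V *m V^T = 1%:M /\ (forall k, 0 <= s k) /\
      (forall i j, (i <= j)%N -> s j <= s i) /\
      (forall k, (minn m0 n0 <= k)%N -> s k = 0) /\
      Y0 = U *m ndiag m0 n0 s *m V^T.
  move=> m0 n0 Y0 ->; exists 1%:M, 1%:M, (fun _ => 0).
  by do !split; rewrite ?trmx1 ?mulmx1 ?ndiag0 ?mulmx0 ?mul0mx.
elim: m n Y => [|m IH] n Y; first by apply: triv; rewrite flatmx0.
case: n Y => [|n] Y; first by apply: triv; rewrite thinmx0.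
pose S := Y^T *m Y.
have SS : S^T = S by rewrite /S trmx_mul trmxK.
have [Q [mu [QQ ES]]] := spectral SS.
have QQ' := mulmx1C QQ.
have [k Hk] := exmax (fun i => mu 0 i).
set lam := mu 0 k.
have Ray : forall x, nrm2 (Y *m x) <= lam * nrm2 x.
  move=> x.
  have -> : nrm2 (Y *m x) = ((Q^T *m x)^T *m diag_mx mu *m (Q^T *m x)) 0 0.
    by rewrite /nrm2 !trmx_mul trmxK !mulmxA -(mulmxA _ Y^T) -/S ES !mulmxA.
  rewrite quad_diag -(nrm2_orth x (_ : Q^T^T *m Q^T = 1%:M)); last by rewrite trmxK.
  rewrite /nrm2 mxE mulr_sumr; apply: ler_sum => i _; rewrite !mxE.
  by rewrite -expr2 ler_wpM2r ?sqr_ge0.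
pose v := Q *m (delta_mx k 0 : 'cV_n.+1).
have Sv : S *m v = lam *: v.
  by rewrite ES /v -!mulmxA (mulmxA Q^T) QQ' mul1mx diag_delta -scalemxAr.
have nv : nrm2 v = 1 by rewrite nrm2_orth // nrm2_delta.
have [lam0|lam0] := lerP lam 0.
  apply: triv; apply/matrixP => i j; rewrite mxE.
  have := Ray (delta_mx j 0); rewrite nrm2_delta mulr1 => H.
  have : nrm2 (Y *m delta_mx j 0) = 0.
    by apply/eqP; rewrite eq_le (le_trans H lam0) nrm2_ge0.
  move/cnorm_eq0; rewrite -colE => /colP /(_ i); rewrite !mxE //.
pose sig := Num.sqrt lam.
have sig0 : 0 < sig by rewrite sqrtr_gt0.
have sig2 : sig ^+ 2 = lam by rewrite sqr_sqrtr // ltW.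
pose u := sig^-1 *: (Y *m v).
have nYv : nrm2 (Y *m v) = lam.
  by rewrite /nrm2 trmx_mul -mulmxA (mulmxA Y^T) -/S Sv -scalemxAr mxE -/(nrm2 v) nv mulr1.
have uu : u^T *m u = 1%:M.
  rewrite [u^T *m u]mx11_scalar -/(nrm2 u) /u nrm2_Z nYv exprVn -sig2.
  by rewrite mulVf // expf_neq0 // gt_eqF.
have vv : v^T *m v = 1%:M by rewrite [v^T *m v]mx11_scalar -/(nrm2 v) nv.
have [H1 [HH1 He1]] := householder uu.
have [H2 [HH2 He2]] := householder vv.
have HH1' := mulmx1C HH1; have HH2' := mulmx1C HH2.
have Yv : Y *m v = sig *: u by rewrite /u scalerA mulfV ?gt_eqF // scale1r.
have YTu : Y^T *m u = sig *: v.
  rewrite /u -scalemxAr mulmxA -/S Sv scalerA -sig2 expr2 mulrA mulVf ?gt_eqF //.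
  by rewrite mul1r.
pose T : 'M[R]_(m.+1, n.+1) := H1^T *m Y *m H2.
have TE : T = H1^T *m Y *m H2 by [].
clearbody T.
have Te : T *m (delta_mx 0 0 : 'cV_n.+1) = sig *: delta_mx 0 0.
  by rewrite TE -!mulmxA He2 Yv -scalemxAr -He1 mulmxA HH1' mul1mx.
have TTe : T^T *m (delta_mx 0 0 : 'cV_m.+1) = sig *: delta_mx 0 0.
  by rewrite TE !trmx_mul trmxK -!mulmxA He1 YTu -scalemxAr -He2 mulmxA HH2' mul1mx.
have Tc : col 0 T = sig *: delta_mx 0 0 by rewrite colE.
have TTc : col 0 T^T = sig *: delta_mx 0 0 by rewrite colE.
have l0 : forall (p : nat) (j : 'I_1), lshift p j = 0.
  by move=> p j; apply/val_inj; rewrite /= [j]ord1.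
have Tdl : dlsubmx (T : 'M_(1 + m, 1 + n)) = 0.
  apply/matrixP => i j; rewrite !mxE l0.
  have /matrixP /(_ (rshift 1 i) 0) := Tc.
  by rewrite !mxE /= mulr0.
have Tur : ursubmx (T : 'M_(1 + m, 1 + n)) = 0.
  rewrite -[T]trmxK -trmx_dlsub; apply/trmx_inj; rewrite trmxK trmx0.
  apply/matrixP => i j; rewrite !mxE l0.
  have /matrixP /(_ (rshift 1 i) 0) := TTc.
  by rewrite !mxE /= mulr0.
have Tul : ulsubmx (T : 'M_(1 + m, 1 + n)) = sig%:M.
  rewrite [ulsubmx (T : 'M_(1 + m, 1 + n))]mx11_scalar; congr (_%:M).
  have /matrixP /(_ 0 0) := Tc.
  by rewrite !mxE !l0 !eqxx /= mulr1.
have [U' [V' [s' [UU' [VV' [s0' [sd' [sz' EY']]]]]]]] := IH n (drsubmx (T : 'M_(1 + m, 1 + n))).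
have ET : T = block_mx (sig%:M : 'M_1) 0 0 (drsubmx (T : 'M_(1 + m, 1 + n))).
  by rewrite -Tul -Tur -Tdl submxK.
have Ray' : forall x, nrm2 (drsubmx (T : 'M_(1 + m, 1 + n)) *m x) <= lam * nrm2 x.
  move=> x.
  have : (T : 'M_(1 + m, 1 + n)) *m col_mx (0 : 'cV_1) x = col_mx (0 : 'cV_1) (drsubmx (T : 'M_(1 + m, 1 + n)) *m x).
    by rewrite {1}ET mul_block_col !mulmx0 mul0mx !add0r.
  move/(congr1 (@nrm2 (1 + m))); rewrite !nrm2_col nrm20 add0r => <-.
  rewrite TE -!mulmxA (nrm2_orth _ (_ : H1^T^T *m H1^T = 1%:M)); last by rewrite trmxK.
  apply: le_trans (Ray _) _.
  by rewrite (nrm2_orth _ HH2') nrm2_col0.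
have tb := top_bound UU' VV' sz' EY' (ltW lam0) Ray'.
have s'0 : s' 0%N <= sig.
  rewrite -(ger0_norm (s0' 0%N)) -sqrtr_sqr; by rewrite /sig ler_sqrt // ltW.
exists (H1 *m block_mx (1%:M : 'M_1) 0 0 U'), (H2 *m block_mx (1%:M : 'M_1) 0 0 V'),
  (fun k => if k is k'.+1 then s' k' else sig).
split.
  by rewrite trmx_mul mulmxA -(mulmxA H1) (blk_orth UU') mulmx1 HH1.
split.
  by rewrite trmx_mul mulmxA -(mulmxA H2) (blk_orth VV') mulmx1 HH2.
split; first by case => [|kk] //; exact: ltW.
split.
  case => [|i] [|j] //= ij; first exact: le_trans (sd' 0%N j isT) s'0.
  exact: sd'.
split.
  case => [|kk]; first by rewrite minnSS.
  by rewrite minnSS ltnS => /sz'.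
rewrite ndiag_block trmx_mul.
set B1 := block_mx _ 0 0 U'; set B2 := block_mx _ 0 0 V'; set X := block_mx _ 0 0 (ndiag m n s').
have -> : H1 *m B1 *m X *m (B2^T *m H2^T) = H1 *m (B1 *m X *m B2^T) *m H2^T.
  by rewrite !mulmxA.
rewrite /B1 /B2 /X blk_conj2 -EY' -ET TE !mulmxA HH1 mul1mx -mulmxA HH2 mulmx1 //.
Qed.


End SVD.

Section Main.
Variable R : rcfType.

Definition ext n (p : 'cV[R]_n) (k : nat) : R := \sum_(i < n | (i : nat) == k) p i 0.

Lemma ext_ord n (p : 'cV[R]_n) (i : 'I_n) : ext p i = p i 0.
Proof. by rewrite /ext (big_pred1 i) // => j /=. Qed.

Lemma ext_out n (p : 'cV[R]_n) k : (n <= k)%N -> ext p k = 0.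
Proof.
move=> nk; rewrite /ext big_pred0 // => j /=.
by apply/negbTE; rewrite neq_ltn (leq_trans (ltn_ord j) nk).
Qed.

Lemma ext_sq n (p : 'cV[R]_n) j : \sum_(0 <= k < j) ext p k ^+ 2 <= nrm2 p.
Proof.
apply: (@le_trans _ _ (\sum_(0 <= k < j + n) ext p k ^+ 2)).
  rewrite (big_cat_nat (n := j) (p := j + n)) ?leq_addr //= lerDl.
  by apply: sumr_ge0 => k _; exact: sqr_ge0.
rewrite (big_cat_nat (n := n) (p := j + n)) ?leq_addl //= [X in _ + X]big_nat_cond.
rewrite [X in _ + X]big1 ?addr0.
  rewrite big_mkord /nrm2 mxE le_eqVlt; apply/orP; left; apply/eqP.
  by apply: eq_bigr => i _; rewrite ext_ord !mxE expr2.
by move=> k /andP [/andP [nk _] _]; rewrite ext_out // expr0n.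
Qed.

Lemma quad_ndiag d1 d2 (t : nat -> R) (p : 'cV[R]_d1) (q : 'cV[R]_d2) :
  (p^T *m ndiag d1 d2 t *m q) 0 0 = \sum_(0 <= k < d1) t k * (ext p k * ext q k).
Proof.
rewrite big_mkord mxE.
under eq_bigr do rewrite mxE mulr_suml.
rewrite exchange_big /=; apply: eq_bigr => i _.
rewrite ext_ord /ext mulr_sumr [RHS]mulr_sumr [RHS]big_mkcond /=; apply: eq_bigr => j _.
rewrite !mxE eq_sym; case: eqP => _; first by ring.
by rewrite mulr0 mul0r.
Qed.

Lemma frob_rank1 m n (a c : 'cV[R]_m) (b e : 'cV[R]_n) :
  frob_inner (a *m b^T) (c *m e^T) = (a^T *m c) 0 0 * (b^T *m e) 0 0.
Proof.
rewrite /frob_inner !mxE mulr_suml; apply: eq_bigr => i _.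
rewrite mxE mulr_sumr; apply: eq_bigr => j _.
by rewrite !mxE !big_ord1 !mxE; ring.
Qed.

Lemma frob_Y_rank1 m n (Y : 'M[R]_(m, n)) (a : 'cV[R]_m) (b : 'cV[R]_n) :
  frob_inner Y (a *m b^T) = (a^T *m Y *m b) 0 0.
Proof.
rewrite /frob_inner mxE.
under [RHS]eq_bigr do rewrite mxE mulr_suml.
rewrite exchange_big /=; apply: eq_bigr => i _; apply: eq_bigr => j _.
by rewrite !mxE big_ord1 !mxE; ring.
Qed.

Lemma frobDr m n (A B C : 'M[R]_(m, n)) :
  frob_inner A (B + C) = frob_inner A B + frob_inner A C.
Proof.
rewrite /frob_inner -big_split; apply: eq_bigr => i _; rewrite -big_split.
by apply: eq_bigr => j _; rewrite mxE mulrDr.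
Qed.

Lemma frobDl m n (A B C : 'M[R]_(m, n)) :
  frob_inner (B + C) A = frob_inner B A + frob_inner C A.
Proof.
rewrite /frob_inner -big_split; apply: eq_bigr => i _; rewrite -big_split.
by apply: eq_bigr => j _; rewrite mxE mulrDl.
Qed.

Lemma frobNr m n (A B : 'M[R]_(m, n)) : frob_inner A (- B) = - frob_inner A B.
Proof.
rewrite /frob_inner -sumrN; apply: eq_bigr => i _; rewrite -sumrN.
by apply: eq_bigr => j _; rewrite mxE mulrN.
Qed.

Lemma frob_ge0 m n (A : 'M[R]_(m, n)) : 0 <= frob_inner A A.
Proof. by apply: sumr_ge0 => i _; apply: sumr_ge0 => j _; rewrite -expr2 sqr_ge0. Qed.

Lemma frob_eq0 m n (A : 'M[R]_(m, n)) : frob_inner A A = 0 -> A = 0.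
Proof.
move=> /eqP; rewrite psumr_eq0; last by move=> i _; apply: sumr_ge0 => j _; rewrite -expr2 sqr_ge0.
move=> /allP H; apply/matrixP => i j; rewrite mxE.
move: (H i (mem_index_enum _)) => /=; rewrite psumr_eq0; last by move=> k _; rewrite -expr2 sqr_ge0.
by move=> /allP /(_ j (mem_index_enum _)); rewrite /= mulf_eq0 orbb => /eqP.
Qed.

Lemma frob_cs m n (A B : 'M[R]_(m, n)) : frob_inner A B <= frob_norm A * frob_norm B.
Proof.
rewrite /frob_norm /frob_inner !pair_bigA /=.
have := cs_sum_sqrt (index_enum _) (fun p : 'I_m * 'I_n => A p.1 p.2) (fun p => B p.1 p.2).
by rewrite /= (eq_bigr _ (fun p _ => expr2 (A p.1 p.2))) (eq_bigr _ (fun p _ => expr2 (B p.1 p.2))).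
Qed.

Lemma sumeq N (f : nat -> R) k :
  \sum_(i < N | (i : nat) == k) f i = if (k < N)%N then f k else 0.
Proof.
case: ifP => kN.
  by rewrite (big_pred1 (Ordinal kN)).
rewrite big_pred0 // => j /=; apply/negbTE; apply: contraFN kN => /eqP <-.
exact: ltn_ord.
Qed.

Lemma rdiag_ndiag d1 d2 (s : 'rV[R]_(minn d1 d2)) :
  rdiag s = ndiag d1 d2 (fun k => \sum_(i < minn d1 d2 | (i : nat) == k) s 0 i).
Proof.
apply/matrixP => i j; rewrite !mxE.
case: eqP => [ij|ij].
  rewrite [RHS]big_mkcond /=; apply: eq_bigr => k _; rewrite -ij andbb //.
apply: big1 => k _; case: eqP => // ki; case: eqP => // kj.
by exfalso; apply: ij; rewrite -ki -kj.
Qed.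

Lemma svd_exists d1 d2 (Y : 'M[R]_(d1, d2)) : exists s, is_svd Y s.
Proof.
have [U [V [s [UU [VV [s0 [sd [sz EY]]]]]]]] := svd_nat Y.
exists (\row_(k < minn d1 d2) s k); split.
  by move=> i; rewrite mxE.
split.
  by move=> i j ij; rewrite !mxE; apply: sd.
exists U, V; split => //; split => //.
rewrite rdiag_ndiag EY; congr (_ *m _ *m _).
apply/matrixP => i j; rewrite !mxE; case: eqP => // _.
under eq_bigr do rewrite mxE.
rewrite (sumeq _ s); case: ifP => // /negbT; rewrite -leqNgt => /sz ->.
by [].
Qed.

Lemma sigma_svd d1 d2 (Y : 'M[R]_(d1, d2)) : is_svd Y (sigma Y).
Proof. exact: (epsilon_spec _ _ (svd_exists Y)). Qed.

Lemma sv_ge0 d1 d2 (Y : 'M[R]_(d1, d2)) k : 0 <= sv Y k.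
Proof. by apply: sumr_ge0 => i _; have [h _] := sigma_svd Y; exact: h. Qed.

Lemma sv_dec d1 d2 (Y : 'M[R]_(d1, d2)) i j : (i <= j)%N -> sv Y j <= sv Y i.
Proof.
move=> ij; have [_ [hd _]] := sigma_svd Y.
case: (ltnP j (minn d1 d2)) => jN.
  have iN : (i < minn d1 d2)%N by exact: leq_ltn_trans ij jN.
  rewrite /sv (big_pred1 (Ordinal jN)) // (big_pred1 (Ordinal iN)) //.
  exact: hd.
rewrite /sv big_pred0; first exact: sv_ge0.
move=> k /=; apply/negbTE; rewrite neq_ltn (leq_trans (ltn_ord k) jN) //.
Qed.

Lemma dotC n (a c : 'cV[R]_n) : (c^T *m a) 0 0 = (a^T *m c) 0 0.
Proof. by rewrite !mxE; apply: eq_bigr => i _; rewrite !mxE mulrC. Qed.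

Lemma nrm2_orthT n (U : 'M[R]_n) (x : 'cV[R]_n) : U *m U^T = 1%:M -> nrm2 (U^T *m x) = nrm2 x.
Proof. by move=> UU; rewrite nrm2_orth // trmxK. Qed.

Lemma key_ineq d1 d2 (Y : 'M[R]_(d1.+1, d2.+1)) (a c : 'cV[R]_d1.+1) (b e : 'cV[R]_d2.+1) :
  (a^T *m c) 0 0 = 0 ->
  frob_inner Y (a *m b^T + c *m e^T) <= (sv Y 0 + sv Y 1) * frob_norm (a *m b^T + c *m e^T).
Proof.
move=> ac.
have [_ [_ [U [V [UU [VV EY]]]]]] := sigma_svd Y.
pose t k := sv Y k.
have EY' : Y = U *m ndiag _ _ t *m V^T by rewrite EY rdiag_ndiag.
set M := a *m b^T + c *m e^T; set F := frob_norm M.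
have F0 : 0 <= F by rewrite /F /frob_norm sqrtr_ge0.
pose p := U^T *m a; pose q := V^T *m b; pose r := U^T *m c; pose g := V^T *m e.
pose z k := ext p k * ext q k + ext r k * ext g k.
have quad : forall (x : 'cV_d1.+1) (y : 'cV_d2.+1),
    (x^T *m Y *m y) 0 0 = \sum_(0 <= k < d1.+1) t k * (ext (U^T *m x) k * ext (V^T *m y) k).
  move=> x y; rewrite -quad_ndiag EY' trmx_mul trmxK !mulmxA //.
have EYM : frob_inner Y M = \sum_(0 <= k < d1.+1) t k * z k.
  rewrite frobDr !frob_Y_rank1 !quad -big_split /=.
  by apply: eq_bigr => k _; rewrite mulrDr.
have FF : F ^+ 2 = nrm2 a * nrm2 b + nrm2 c * nrm2 e.
  rewrite /F /frob_norm sqr_sqrtr ?frob_ge0 // /M !frobDl !frobDr !frob_rank1.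
  by rewrite (dotC a c) ac /nrm2; ring.
have nab : Num.sqrt (nrm2 a) * Num.sqrt (nrm2 b) <= F.
  rewrite -sqrtrM ?nrm2_ge0 // -(ger0_norm F0) -sqrtr_sqr ler_sqrt ?sqr_ge0 // FF lerDl.
  by rewrite mulr_ge0 ?nrm2_ge0.
have nce : Num.sqrt (nrm2 c) * Num.sqrt (nrm2 e) <= F.
  rewrite -sqrtrM ?nrm2_ge0 // -(ger0_norm F0) -sqrtr_sqr ler_sqrt ?sqr_ge0 // FF lerDr.
  by rewrite mulr_ge0 ?nrm2_ge0.
have pre1 : forall n1 n2 (x : 'cV[R]_n1) (y : 'cV[R]_n2) j,
    \sum_(0 <= k < j) ext x k * ext y k <= Num.sqrt (nrm2 x) * Num.sqrt (nrm2 y).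
  move=> n1 n2 x y j; apply: le_trans (cs_sum_sqrt _ _ _) _.
  by apply: ler_pM; rewrite ?sqrtr_ge0 // ler_sqrt ?nrm2_ge0 // ext_sq.
have pre : forall j, \sum_(0 <= k < j) z k <= 2 * F.
  move=> j; rewrite big_split /= mulr2n mulrDl mul1r; apply: lerD.
    by apply: le_trans (pre1 _ _ _ _ _) _; rewrite /p /q !nrm2_orthT.
  by apply: le_trans (pre1 _ _ _ _ _) _; rewrite /r /g !nrm2_orthT.
have UU' := mulmx1C UU; have VV' := mulmx1C VV.
have colT : forall n (W : 'M[R]_n.+1) (x : 'cV_n.+1), ((col 0 W)^T *m x) 0 0 = (W^T *m x) 0 0.
  by move=> n W x; rewrite !mxE; apply: eq_bigr => i _; rewrite !mxE.
have colN : forall n (W : 'M[R]_n.+1), W^T *m W = 1%:M -> ((col 0 W)^T *m col 0 W) 0 0 = 1.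
  by move=> n W WW; rewrite colT colE mulmxA WW mul1mx mxE.
have z0 : z 0%N <= F.
  have e1 : forall n (x : 'cV[R]_n.+1), ext x 0 = x 0 0 := fun n x => ext_ord x ord0.
  rewrite /z !e1.
  have -> : p 0 0 * q 0 0 + r 0 0 * g 0 0 = frob_inner (col 0 U *m (col 0 V)^T) M.
    by rewrite /M frobDr !frob_rank1 !colT.
  apply: le_trans (frob_cs _ _) _; rewrite -/F ler_piMl //.
  by rewrite /frob_norm frob_rank1 !colN // mulr1 sqrtr1.
have tdec : forall i j, (i <= j)%N -> t j <= t i by move=> i j; exact: sv_dec.
have t0 : forall k, 0 <= t k by move=> k; exact: sv_ge0.
have ab := @abel R t z d1.+1 t0 tdec 1%N (2 * F - z 0%N) isT.
have ab' : \sum_(1 <= k < d1.+1) t k * z k <= t 1%N * (2 * F - z 0%N).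
  apply: ab; first by rewrite subr_ge0; apply: le_trans z0 _; rewrite mulr2n mulrDl mul1r lerDl.
  move=> j /andP [j1 _]; rewrite lerBrDl.
  by have := pre j; rewrite (big_ltn (ltn_trans (ltn0Sn 0) j1)).
rewrite EYM big_ltn // -/(t 0%N) -/(t 1%N).
have t10 := tdec _ _ (leq0n 1).
have t1p := t0 1%N.
have h1 : 0 <= t 0%N - t 1%N by rewrite subr_ge0.
have h2 : 0 <= F - z 0%N by rewrite subr_ge0.
have := mulr_ge0 h1 h2.
move: ab'; rewrite /t; nra.
Qed.

End Main.

Theorem lemmaC1 (R : rcfType) (d1 d2 : nat)
    (f : 'rV[R]_(minn d1 d2) -> R)
    (wb : 'cV[R]_d1) (xb : 'cV[R]_d2) (kappa : R) :
  convex_fun f -> symmetric_fun f -> sign_invariant f ->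
  0 < kappa ->
  (forall (w : 'cV[R]_d1) (x : 'cV[R]_d2),
     f_sigma f (w *m x^T - wb *m xb^T) - f_sigma f (wb *m xb^T - wb *m xb^T)
       >= kappa * frob_norm (w *m x^T - wb *m xb^T)) ->
  forall (w : 'cV[R]_d1) (x : 'cV[R]_d2) (Y : 'M[R]_(d1, d2)),
    w *m x^T != wb *m xb^T ->
    subdiff (f_sigma f) (w *m x^T - wb *m xb^T) Y ->
    sv Y 0 + sv Y 1 >= kappa.
Proof.
move=> _ _ _ kpos Hg w x Y neq sub.
case: d1 f wb Hg w Y neq sub => [|d1] f wb Hg w Y neq sub.
  by rewrite [w *m _]flatmx0 [wb *m _]flatmx0 eqxx in neq.
case: d2 f xb Hg x Y neq sub => [|d2] f xb Hg x Y neq sub.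
  by rewrite [w *m _]thinmx0 [wb *m _]thinmx0 eqxx in neq.
set M := w *m x^T - wb *m xb^T.
have MN : M != 0 by rewrite /M subr_eq0.
pose lam := (w^T *m - wb) 0 0 / (w^T *m w) 0 0.
pose c := - wb - lam *: w.
pose b := x + lam *: xb.
have EM : M = w *m b^T + c *m xb^T.
  rewrite /M /b /c linearD /= linearZ /= mulmxDr mulmxBl mulNmx -scalemxAr -scalemxAl.
  by rewrite addrACA subrr addr0.
have ac : (w^T *m c) 0 0 = 0.
  have [w0|wn0] := eqVneq ((w^T *m w) 0 0) 0.
    by rewrite (cnorm_eq0 w0) trmx0 mul0mx mxE.
  have E1 : forall (A B : 'M[R]_1), (A - B) 0 0 = A 0 0 - B 0 0 by move=> A B; rewrite !mxE.
  have Z1 : forall (k : R) (A : 'M[R]_1), (k *: A) 0 0 = k * A 0 0 by move=> k A; rewrite mxE.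
  rewrite /c mulmxBr -scalemxAr E1 Z1 /lam divfK //.
  by rewrite subrr.
have key := key_ineq Y b xb ac.
rewrite -EM in key.
have Hs := sub 0.
have Hgw := Hg w x; rewrite subrr -/M in Hgw.
rewrite sub0r frobNr in Hs.
have F0 : 0 < frob_norm M.
  rewrite /frob_norm sqrtr_gt0 lt_def frob_ge0 andbT.
  by apply: contra MN => /eqP /frob_eq0 ->.
rewrite -(ler_pM2r F0).
apply: le_trans Hgw _; apply: le_trans key; lra.
Qed.
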